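(* Let $M$ be a dihedral axial decomposition algebra of Majorana type $(\eta,\eta)$ over a field $\mathbb{F}$ with $\operatorname{char}\mathbb{F}\neq2$, where $\eta\in\mathbb{F}\setminus\{0,1,\tfrac12\}$, with generating axes $(a_i)_{i\in\mathbb{Z}}$. Let $x,y\in M$ satisfy (i) $f_2(x)=-\tau_0(x)$, $f_3(x)=x$ and $x+f_1(x)+f_2(x)=0$; (ii) $f_1(y)=-y$ and $\tau_0(y)=y$. Suppose there exist $\alpha_0,\dots,\alpha_k\in\mathbb{F}$ with $x+y+\sum_{i=0}^k\alpha_i(a_{i+1}-a_{-i})=0$. Then: (1) $\alpha_k(a_{k+2}-a_{-k-2})+\sum_{i=1}^{k+1}(\alpha_{i+1}+2\alpha_i+2\alpha_{i-1}+\alpha_{i-2})(a_i-a_{-i})=0$, where $\alpha_{k+1}=\alpha_{k+2}=0$ and $\alpha_{-1}=-\alpha_0$. Moreover, if $\alpha_k\neq0$, then $\operatorname{adim}\le 2k+4$, and if $\operatorname{adim}=2k+4$, then $M$ satisfies an odd relation. (2) If $x=0$, then $\alpha_k(a_{k+1}-a_{-k-1})+\sum_{i=1}^k(\alpha_i+\alpha_{i-1})(a_i-a_{-i})=0$. Moreover, if $\alpha_k\neq0$, then $\operatorname{adim}\le 2k+2$, and if $\operatorname{adim}=2k+2$, then $M$ satisfies an odd relation.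
   Context: $M$ is a commutative nonassociative $\mathbb{F}$-algebra. With $\Phi(0)=0,\Phi(1)=1,\Phi(2)=\Phi(3)=\eta$, an axis $a\in M$ is an element together with a decomposition $M=\bigoplus_{i=0}^3M^i(a)$ such that $xa=\Phi(i)x$ for $x\in M^i(a)$, $M^1(a)=\mathbb{F}a$, and $M^0(a)M^i(a)\subset M^i(a)$ for all $i$, $M^2(a)M^2(a)\subset M^0(a)\oplus M^1(a)$, $M^2(a)M^3(a)\subset M^3(a)$, $M^3(a)M^3(a)\subset M^0(a)\oplus M^1(a)\oplus M^2(a)$. The Miyamoto involution $\tau(a)$ is the automorphism acting as $1$ on $M^0(a)\oplus M^1(a)\oplus M^2(a)$ and $-1$ on $M^3(a)$. $M$ is dihedral (of Majorana type $(\eta,\eta)$) with axes $(a_i)_{i\in\mathbb{Z}}$ if: $M$ is generated by the $a_i$; $a_i\mapsto a_{i+1}$ extends to an automorphism of $M$; and $\tau(a_j)(a_i)=a_{2j-i}$ for all $i,j$. Notation: $f_i$ is the automorphism with $f_i(a_j)=a_{i+j}$ for all $j$; $\tau_0=\tau(a_0)$. The axial dimension $\operatorname{adim}$ is $\dim_{\mathbb{F}}\operatorname{Span}\{a_i: i\in\mathbb{Z}\}$. $M$ satisfies an odd relation if either $\operatorname{adim}=2m$ and there are $\beta_1,\dots,\beta_m\in\mathbb{F}$ with $\beta_m\neq0$ and $\sum_{i=1}^m\beta_i(a_i-a_{-i})=0$, or $\operatorname{adim}=2m+1$ and there are $\beta_0,\dots,\beta_m\in\mathbb{F}$ with $\beta_m\neq0$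 and $\sum_{i=0}^m\beta_i(a_{i+1}-a_{-i})=0$. *)

(* Defs.v *)
From HB Require Import structures.
From mathcomp Require Import all_boot all_order all_algebra.
Set Implicit Arguments. Unset Strict Implicit. Unset Printing Implicit Defensive.
Import Order.TTheory GRing.Theory Num.Theory.
Local Open Scope ring_scope.

Section AxialDefs.
Variables (F : fieldType) (M : lmodType F).

Definition comm_algebra (mul : M -> M -> M) : Prop :=
  (forall x y, mul x y = mul y x) /\
  (forall (c : F) x y z, mul (c *: x + y) z = c *: mul x z + mul y z).

Definition subspace (V : M -> Prop) : Prop :=
  V 0 /\ forall (c : F) x y, V x -> V y -> V (c *: x + y).

Definition Phi (eta : F) (i : nat) : F :=
  match i with 0 => 0 | 1 => 1 | _ => eta end.

Definition axis (mul : M -> M -> M) (eta : F) (a : M) (V : nat -> M -> Prop) : Prop :=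
  [/\ (forall i, (i < 4)%N -> subspace (V i)),
      (forall x, exists x0 x1 x2 x3,
          [/\ V 0%N x0, V 1%N x1, V 2%N x2, V 3%N x3 & x = x0 + x1 + x2 + x3]),
      (forall x0 x1 x2 x3, V 0%N x0 -> V 1%N x1 -> V 2%N x2 -> V 3%N x3 ->
          x0 + x1 + x2 + x3 = 0 -> [/\ x0 = 0, x1 = 0, x2 = 0 & x3 = 0]),
      (forall i x, (i < 4)%N -> V i x -> mul x a = Phi eta i *: x) &
      [/\
          (forall x, V 1%N x <-> exists c : F, x = c *: a),
          (forall i x y, (i < 4)%N -> V 0%N x -> V i y -> V i (mul x y)),
          (forall x y, V 2%N x -> V 2%N y ->
             exists u v, [/\ V 0%N u, V 1%N v & mul x y = u + v]),
          (forall x y, V 2%N x -> V 3%N y -> V 3%N (mul x y)) &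
          (forall x y, V 3%N x -> V 3%N y ->
             exists u v w, [/\ V 0%N u, V 1%N v, V 2%N w & mul x y = u + v + w])]].

(* miyamoto V x z : z is the image of x under the Miyamoto involution of the
   axis with decomposition V (identity on V0+V1+V2, minus identity on V3). *)
Definition miyamoto (V : nat -> M -> Prop) (x z : M) : Prop :=
  exists x0 x1 x2 x3,
    [/\ V 0%N x0, V 1%N x1, V 2%N x2, V 3%N x3 &
        (x = x0 + x1 + x2 + x3 /\ z = x0 + x1 + x2 - x3)].

Definition automorphism (mul : M -> M -> M) (f : M -> M) : Prop :=
  [/\ (forall (c : F) x y, f (c *: x + y) = c *: f x + f y),
      bijective f &
      (forall x y, f (mul x y) = mul (f x) (f y))].

Definition generated_by (mul : M -> M -> M) (a : int -> M) : Prop :=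
  forall S : M -> Prop, subspace S -> (forall x y, S x -> S y -> S (mul x y)) ->
    (forall i, S (a i)) -> forall x, S x.

Definition dihedral (mul : M -> M -> M) (eta : F) (a : int -> M)
    (V : int -> nat -> M -> Prop) : Prop :=
  [/\ forall j, axis mul eta (a j) (V j),
      generated_by mul a,
      (exists f, automorphism mul f /\ forall i, f (a i) = a (i + 1)) &
      (forall i j, miyamoto (V j) (a i) (a (2 * j - i)))].

Definition in_span (s : seq M) (v : M) : Prop :=
  exists c : 'I_(size s) -> F, v = \sum_(i < size s) c i *: s`_i.

Definition lin_indep (s : seq M) : Prop :=
  forall c : 'I_(size s) -> F, \sum_(i < size s) c i *: s`_i = 0 -> forall i, c i = 0.

Definition in_span_a (a : int -> M) (v : M) : Prop :=
  exists l : seq int, in_span (map a l) v.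

Definition has_adim (a : int -> M) (n : nat) : Prop :=
  exists s : seq M, [/\ size s = n, lin_indep s,
    (forall i : 'I_(size s), in_span_a a s`_i) & (forall j, in_span s (a j))].

Definition adim_le (a : int -> M) (n : nat) : Prop :=
  exists m, (m <= n)%N /\ has_adim a m.

Definition odd_relation (a : int -> M) : Prop :=
  exists m : nat,
    ((0 < m)%N /\ has_adim a (2 * m) /\
      exists beta : nat -> F, beta m != 0 /\
        \sum_(1 <= i < m.+1) beta i *: (a i%:Z - a (- i%:Z)) = 0)
 \/ (has_adim a (2 * m).+1 /\
      exists beta : nat -> F, beta m != 0 /\
        \sum_(0 <= i < m.+1) beta i *: (a (i%:Z + 1) - a (- i%:Z)) = 0).

End AxialDefs.

(* alpha_0..alpha_k extended by alpha_{k+1} = alpha_{k+2} = ... = 0 and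
   alpha_{-1} = - alpha_0 (other negative indices are never used). *)
Definition alpha_ext (F : fieldType) (k : nat) (alpha : nat -> F) (j : int) : F :=
  match j with
  | Posz n => if (n <= k)%N then alpha n else 0
  | Negz 0 => - alpha 0%N
  | Negz _ => 0
  end.

(* Main.v *)
Require Import Defs.
From HB Require Import structures.
From mathcomp Require Import all_boot all_order all_algebra.
From mathcomp Require Import zify ring.
From Stdlib Require Import Classical.
Import Order.TTheory GRing.Theory Num.Theory.
Local Open Scope ring_scope.
Set Implicit Arguments. Unset Strict Implicit.
Definition spn (F : fieldType) (M : lmodType F) (s : seq M) (v : M) : Prop :=
  exists c : nat -> F, v = \sum_(i < size s) c i *: s`_i.

Definition indep (F : fieldType) (M : lmodType F) (s : seq M) : Prop :=
  forall c : nat -> F, \sum_(i < size s) c i *: s`_i = 0 ->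
    forall i, (i < size s)%N -> c i = 0.

Lemma spn0 (F : fieldType) (M : lmodType F) (s : seq M) : spn s 0.
Proof. exists (fun _ => 0); by rewrite big1 // => i _; rewrite scale0r. Qed.

Lemma spn_lin (F : fieldType) (M : lmodType F) (s : seq M) (c : F) u v :
  spn s u -> spn s v -> spn s (c *: u + v).
Proof.
move=> [d ->] [e ->]; exists (fun i => c * d i + e i).
rewrite scaler_sumr -big_split /=; apply: eq_bigr => i _.
by rewrite scalerDl scalerA.
Qed.

Lemma spn_sum (F : fieldType) (M : lmodType F) (s : seq M) (n : nat) (G : nat -> M) :
  (forall i, (i < n)%N -> spn s (G i)) -> spn s (\sum_(i < n) G i).
Proof.
elim: n => [|n IH] H; first by rewrite big_ord0; exact: spn0.
rewrite big_ord_recr /= addrC -[G n]scale1r; apply: spn_lin; first exact: H.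
by apply: IH => i hi; apply: H; apply: ltnW.
Qed.

Lemma spn_cons_l (F : fieldType) (M : lmodType F) (s : seq M) u v :
  spn s v -> spn (u :: s) v.
Proof.
move=> [c ->]; exists (fun i => if i is i'.+1 then c i' else 0).
by rewrite /= big_ord_recl /= scale0r add0r.
Qed.

Lemma spn_head (F : fieldType) (M : lmodType F) (s : seq M) u :
  spn (u :: s) u.
Proof.
exists (fun i => if i is 0%N then 1 else 0).
rewrite /= big_ord_recl /= scale1r big1 ?addr0 // => i _; by rewrite scale0r.
Qed.

Lemma spn_nth (F : fieldType) (M : lmodType F) (s : seq M) i :
  (i < size s)%N -> spn s s`_i.
Proof.
elim: s i => [|u s IH] [|i] //= hi; first exact: spn_head.
by apply: spn_cons_l; apply: IH.
Qed.

Lemma spn_mem (F : fieldType) (M : lmodType F) (s : seq M) v :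
  v \in s -> spn s v.
Proof. move=> hv; have <- := nth_index 0 hv; apply: spn_nth; by rewrite index_mem. Qed.

Lemma spn_trans (F : fieldType) (M : lmodType F) (s L : seq M) v :
  (forall i, (i < size L)%N -> spn s L`_i) -> spn L v -> spn s v.
Proof.
move=> HL [c ->]; apply: (spn_sum (G := fun i => c i *: L`_i)) => i hi; rewrite -[_ *: _]addr0.
apply: spn_lin; [exact: HL | exact: spn0].
Qed.

Lemma spn_cons_inv (F : fieldType) (M : lmodType F) (s : seq M) u v :
  spn (u :: s) v -> spn s u -> spn s v.
Proof.
move=> Hv Hu; apply: (spn_trans _ Hv) => -[|i] /= hi //; exact: spn_nth.
Qed.

Lemma indep_cons (F : fieldType) (M : lmodType F) (s : seq M) u :
  indep s -> ~ spn s u -> indep (u :: s).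
Proof.
move=> Hs Hu c; rewrite /= big_ord_recl /= => H.
have c0 : c 0%N = 0.
  apply/eqP; apply/negP => /negP hc; apply: Hu.
  exists (fun i => - (c 0%N)^-1 * c i.+1).
  apply: (scalerI hc); rewrite scaler_sumr.
  have -> : c 0%N *: u = - \sum_(i < size s) c (lift ord0 i) *: (u :: s)`_(lift ord0 i).
    by apply/eqP; rewrite -addr_eq0 H.
  rewrite -sumrN; apply: eq_bigr => i _.
  rewrite scalerA mulrA mulrN mulfV // mulN1r scaleNr.
  by [].
rewrite c0 scale0r add0r in H.
move=> [|i] hi //=; exact: (Hs (fun i => c i.+1) H i hi).
Qed.

Lemma greedy (F : fieldType) (M : lmodType F) (L : seq M) :
  exists s : seq M, [/\ (size s <= size L)%N, indep s,
    (forall i, (i < size s)%N -> s`_i \in L) &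
    (forall v, spn L v -> spn s v)].
Proof.
elim: L => [|u L [s [hsz hind hmem hsp]]].
  by exists [::]; split; [done | move=> c _ i | move=> i | ].
have [Hu|Hu] := classic (spn s u).
  exists s; split => //; first by apply: leqW.
    by move=> i hi; rewrite in_cons (hmem i hi) orbT.
  move=> v hv; apply: (spn_cons_inv _ Hu).
  apply: (spn_trans _ hv) => -[|i] /= hi; first exact: spn_head.
  by apply: spn_cons_l; apply: hsp; apply: spn_nth.
exists (u :: s); split => //=; first exact: indep_cons.
  move=> [|i] hi /=; first by rewrite in_cons eqxx.
  by rewrite in_cons (hmem i hi) orbT.
move=> v hv; apply: (spn_trans _ hv) => -[|i] /= hi; first exact: spn_head.
by apply: spn_cons_l; apply: hsp; apply: spn_nth.
Qed.

Lemma adim_of_list (F : fieldType) (M : lmodType F) (a : int -> M) (l : seq int) :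
  (forall j, spn (map a l) (a j)) -> adim_le a (size l).
Proof.
move=> H; have [s [hsz hind hmem hsp]] := greedy (map a l).
exists (size s); split; first by rewrite size_map in hsz.
exists s; split => //.
- move=> c hc i; pose c' := fun n => c (insubd i n).
  have e : forall j : 'I_(size s), c' j = c j.
    by move=> j; rewrite /c'; congr c; apply: val_inj; rewrite val_insubd ltn_ord.
  have := hind c'; rewrite (eq_bigr (fun j => c j *: s`_j)); last by move=> j _; rewrite e.
  by move=> /(_ hc i (ltn_ord i)); rewrite e.
- move=> i; have /mapP [j _ ->] := hmem i (ltn_ord i).
  exists [:: j]; exists (fun _ => 1); by rewrite big_ord1 scale1r.
- move=> j; have [c ->] := hsp _ (H j); by exists (fun i => c i).
Qed.
Lemma window (P : int -> Prop) (lo : int) (n : nat) : (0 < n)%N ->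
 (forall i, lo <= i < lo + n%:Z -> P i) ->
 (forall j, (forall i, j - n%:Z <= i < j -> P i) -> P j) ->
 (forall j, (forall i, j < i <= j + n%:Z -> P i) -> P j) ->
 forall j, P j.
Proof.
move=> hn Hw Hup Hdn.
have C : forall d : nat, forall i, lo - d%:Z <= i < lo + n%:Z + d%:Z -> P i.
  elim=> [|d IH] i hi; first by apply: Hw; lia.
  have [h1|h1] := boolP (lo - d%:Z <= i < lo + n%:Z + d%:Z); first exact: IH.
  have [h2|h2] := boolP (i == lo + n%:Z + d%:Z).
    apply: Hup => i' hi'; apply: IH; move/eqP: h2 => h2; lia.
  apply: Hdn => i' hi'; apply: IH; move/eqP: h2 => h2; lia.
move=> j; apply: (C `|j - lo|%N); lia.
Qed.

Lemma spn_scale (F : fieldType) (M : lmodType F) (s : seq M) (c : F) u :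
  spn s u -> spn s (c *: u).
Proof. move=> h; rewrite -[_ *: _]addr0; apply: spn_lin => //; exact: spn0. Qed.

Lemma spn_add (F : fieldType) (M : lmodType F) (s : seq M) u v :
  spn s u -> spn s v -> spn s (u + v).
Proof. move=> h1 h2; rewrite -[u]scale1r; exact: spn_lin. Qed.

Lemma spn_sub (F : fieldType) (M : lmodType F) (s : seq M) u v :
  spn s u -> spn s v -> spn s (u - v).
Proof. move=> h1 h2; rewrite addrC -scaleN1r; exact: spn_lin. Qed.

Lemma solve_rel (F : fieldType) (M : lmodType F) (b : F) (A B S : M) :
  b != 0 -> b *: (A - B) + S = 0 -> A = (- b^-1) *: S + B.
Proof.
move=> hb H; have : b *: (A - B) = - S by apply/eqP; rewrite -addr_eq0 H.
move=> /(congr1 (fun z => b^-1 *: z)); rewrite scalerA mulVf // scale1r.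
by move=> h; rewrite -[A](subrK B) h scalerN -scaleNr.
Qed.

Lemma solve_rel2 (F : fieldType) (M : lmodType F) (b : F) (A B S : M) :
  b != 0 -> b *: (A - B) + S = 0 -> B = b^-1 *: S + A.
Proof.
move=> hb /(solve_rel hb) ->; by rewrite addrA scaleNr addrN add0r.
Qed.

Lemma adim_from_rel (F : fieldType) (M : lmodType F) (a : int -> M) (K : nat)
  (b : F) (g : nat -> F) : (0 < K)%N -> b != 0 ->
  (forall m : int, b *: (a (K%:Z + m) - a (m - K%:Z))
     + \sum_(1 <= i < K) g i *: (a (i%:Z + m) - a (m - i%:Z)) = 0) ->
  adim_le a (2 * K).
Proof.
move=> hK hb H.
pose l := [seq (i%:Z + (1 - K%:Z)) | i <- iota 0 (2 * K)].
have -> : (2 * K = size l)%N by rewrite size_map size_iota.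
apply: adim_of_list.
have hsum : forall m : int, (forall i, m - K%:Z < i < m + K%:Z -> spn (map a l) (a i)) ->
   spn (map a l) (\sum_(1 <= i < K) g i *: (a (i%:Z + m) - a (m - i%:Z))).
  move=> m hm; rewrite big_nat_cond.
  apply: (big_ind (spn (map a l))); [exact: spn0 | exact: spn_add|].
  move=> i; rewrite andbT => hi; apply: spn_scale.
  apply: spn_sub; apply: hm; lia.
apply: (@window (fun j => spn (map a l) (a j)) (1 - K%:Z) (2 * K)); first by lia.
- move=> i hi; apply: spn_mem; apply: map_f; apply/mapP.
  exists (absz (i - (1 - K%:Z))%R); [rewrite mem_iota; lia | lia].
- move=> j hj; have := solve_rel hb (H (j - K%:Z)).
  have -> : K%:Z + (j - K%:Z) = j by lia.
  move=> ->; apply: spn_add; last by apply: hj; lia.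
  by apply: spn_scale; apply: hsum => i hi; apply: hj; lia.
- move=> j hj; have := solve_rel2 hb (H (j + K%:Z)).
  have -> : j + K%:Z - K%:Z = j by lia.
  move=> ->; apply: spn_add; last by apply: hj; lia.
  by apply: spn_scale; apply: hsum => i hi; apply: hj; lia.
Qed.

Lemma add4ACA (V : zmodType) (a0 a1 a2 a3 b0 b1 b2 b3 : V) :
  (a0 + a1 + a2 + a3) + (b0 + b1 + b2 + b3) = (a0 + b0) + (a1 + b1) + (a2 + b2) + (a3 + b3).
Proof. by rewrite addrACA; congr (_ + _); rewrite addrACA; congr (_ + _); rewrite addrACA. Qed.

Lemma miy_lin (F : fieldType) (M : lmodType F) mul eta (a0 : M) V :
  axis mul eta a0 V -> forall (c : F) x z x' z',
  miyamoto V x z -> miyamoto V x' z' -> miyamoto V (c *: x + x') (c *: z + z').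
Proof.
case=> hsub _ _ _ _ c x z x' z' [x0 [x1 [x2 [x3 [h0 h1 h2 h3 [-> ->]]]]]]
  [y0 [y1 [y2 [y3 [g0 g1 g2 g3 [-> ->]]]]]].
have S i u v : (i < 4)%N -> V i u -> V i v -> V i (c *: u + v).
  by move=> hi; case: (hsub i hi) => _; apply.
exists (c *: x0 + y0), (c *: x1 + y1), (c *: x2 + y2), (c *: x3 + y3).
split; try by apply: S.
split; first by rewrite !scalerDr add4ACA.
by rewrite !scalerDr scalerN add4ACA opprD.
Qed.

Lemma miy_uniq (F : fieldType) (M : lmodType F) mul eta (a0 : M) V :
  axis mul eta a0 V -> forall x z z', miyamoto V x z -> miyamoto V x z' -> z = z'.
Proof.
case=> hsub _ hdir _ _ x z z' [x0 [x1 [x2 [x3 [h0 h1 h2 h3 [-> ->]]]]]]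
  [y0 [y1 [y2 [y3 [g0 g1 g2 g3 [E ->]]]]]].
have S i u v : (i < 4)%N -> V i u -> V i v -> V i (u - v).
  move=> hi hu hv; rewrite addrC -scaleN1r; by case: (hsub i hi) => _; apply.
have := hdir _ _ _ _ (S 0%N _ _ isT h0 g0) (S 1%N _ _ isT h1 g1) (S 2%N _ _ isT h2 g2)
  (S 3%N _ _ isT h3 g3).
rewrite -add4ACA -!opprD E subrr => /(_ erefl) [/eqP e0 /eqP e1 /eqP e2 /eqP e3].
move: e0 e1 e2 e3; rewrite !subr_eq0 => /eqP -> /eqP -> /eqP -> /eqP ->.
done.
Qed.

Lemma miy0 (F : fieldType) (M : lmodType F) mul eta (a0 : M) V :
  axis mul eta a0 V -> miyamoto V 0 0.
Proof.
case=> hsub _ _ _ _; have Z i : (i < 4)%N -> V i 0 by move=> hi; case: (hsub i hi).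
exists 0, 0, 0, 0; split; try exact: Z.
by rewrite !addr0 subr0.
Qed.

Lemma miy_sum (F : fieldType) (M : lmodType F) mul eta (a0 : M) V :
  axis mul eta a0 V -> forall (n : nat) (G H : nat -> M),
  (forall i, (i < n)%N -> miyamoto V (G i) (H i)) ->
  miyamoto V (\sum_(i < n) G i) (\sum_(i < n) H i).
Proof.
move=> hax; elim=> [|n IH] G H hGH; first by rewrite !big_ord0; exact: miy0 hax.
rewrite !big_ord_recr /= -[\sum_(i < n) G i]scale1r -[\sum_(i < n) H i]scale1r.
apply: (miy_lin hax); first by apply: IH => i hi; apply: hGH; apply: ltnW.
exact: hGH.
Qed.

Definition Ev (F : fieldType) (M : lmodType F) (a : int -> M) (n : nat) (g : nat -> int)
  (p : nat -> F) : M := \sum_(i < n) p i *: a (g i).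

Definition sh (F : fieldType) (p : nat -> F) (i : nat) : F := if i is j.+1 then p j else 0.

Lemma Ev_lin (F : fieldType) (M : lmodType F) (a : int -> M) n g (c : F) p q :
  Ev a n g (fun i => c * p i + q i) = c *: Ev a n g p + Ev a n g q.
Proof.
rewrite /Ev scaler_sumr -big_split /=; apply: eq_bigr => i _.
by rewrite scalerDl scalerA.
Qed.

Lemma Ev_shift (F : fieldType) (M : lmodType F) (a : int -> M) n g p :
  Ev a n.+1 g (sh p) = Ev a n (fun i => g i.+1) p.
Proof. by rewrite /Ev big_ord_recl /= scale0r add0r. Qed.

Lemma Ev_ext (F : fieldType) (M : lmodType F) (a : int -> M) n g g' p :
  (forall i, g i = g' i) -> Ev a n g p = Ev a n g' p.
Proof. by move=> e; apply: eq_bigr => i _; rewrite e. Qed.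

Lemma Ev_widen (F : fieldType) (M : lmodType F) (a : int -> M) n m g p :
  (forall i, (n <= i)%N -> p i = 0) -> (n <= m)%N -> Ev a m g p = Ev a n g p.
Proof.
move=> hp hnm; rewrite /Ev -(subnKC hnm) big_split_ord /=.
rewrite [X in _ + X]big1 ?addr0 // => i _; by rewrite hp ?scale0r // leq_addr.
Qed.

Lemma Ev_sub (F : fieldType) (M : lmodType F) (a : int -> M) n g h p :
  Ev a n g p - Ev a n h p = \sum_(i < n) p i *: (a (g i) - a (h i)).
Proof. by rewrite /Ev -sumrB; apply: eq_bigr => i _; rewrite scalerBr. Qed.

Lemma Ev_subn (F : fieldType) (M : lmodType F) (a : int -> M) n g h p :
  Ev a n g p - Ev a n h p = \sum_(0 <= i < n) p i *: (a (g i) - a (h i)).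
Proof. by rewrite Ev_sub big_mkord. Qed.

Lemma subrACA (V : zmodType) (a b c d : V) : (a - b) + (c - d) = (a + c) - (b + d).
Proof. by rewrite addrACA opprD. Qed.
Lemma rev4 (V : zmodType) (b0 b1 b2 b3 : V) : b3 + b2 + b1 + b0 = b0 + b1 + b2 + b3.
Proof. by rewrite addrC [_ + b1]addrC [b3 + b2]addrC !addrA. Qed.
Lemma rearr (F : fieldType) (M : lmodType F) (A0 A1 A2 A3 B0 B1 B2 B3 : M) :
  (A0 + 2%:R *: A1 + 2%:R *: A2 + A3) - (B3 + 2%:R *: B2 + 2%:R *: B1 + B0) =
  (A0 - B0) + 2%:R *: (A1 - B1) + 2%:R *: (A2 - B2) + (A3 - B3).
Proof. by rewrite !scalerBr !subrACA [X in _ - X]rev4. Qed.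


Lemma fin_arr (V : zmodType) (x y z u : V) : x + (y - z + u) = -z + (0 + (y + u + x)).
Proof. by rewrite add0r addrC (addrC y) -!addrA (addrC (-z)) !addrA. Qed.

Lemma Ev_W (F : fieldType) (M : lmodType F) (a : int -> M) n g p0 p1 p2 p3 :
  Ev a n g (fun i => p0 i + 2%:R * p1 i + 2%:R * p2 i + p3 i) =
  Ev a n g p0 + 2%:R *: Ev a n g p1 + 2%:R *: Ev a n g p2 + Ev a n g p3.
Proof.
rewrite /Ev !scaler_sumr -!big_split /=; apply: eq_bigr => i _.
by rewrite !scalerA -!scalerDl.
Qed.

Lemma big_identity (F : fieldType) (M : lmodType F) (a : int -> M) (k : nat) (alpha : nat -> F) :
  let S (m : int) := \sum_(0 <= i < k.+1) alpha i *: (a (i%:Z + 1 + m) - a (- i%:Z + m)) in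
  alpha k *: (a (k%:Z + 4) - a (- k%:Z))
  + \sum_(1 <= i < k.+2) (alpha_ext k alpha (i%:Z + 1) + 2%:R * alpha_ext k alpha i%:Z
          + 2%:R * alpha_ext k alpha (i%:Z - 1) + alpha_ext k alpha (i%:Z - 2))
         *: (a (i%:Z + 2) - a (2 - i%:Z))
  = S 0 + 2%:R *: S 1 + 2%:R *: S 2 + S 3.
Proof.
move=> S.
pose P := fun i => if (i <= k)%N then alpha i else 0.
have P0 : forall i, (k.+1 <= i)%N -> P i = 0.
  by move=> i hi; rewrite /P leqNgt hi.
have hS : forall m, S m = Ev a k.+1 (fun i => i%:Z + 1 + m) P - Ev a k.+1 (fun i => - i%:Z + m) P.
  move=> m; rewrite Ev_sub /S big_mkord; apply: eq_bigr => i _.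
  by rewrite /P -ltnS ltn_ord.
pose W := fun i => P i + 2%:R * sh P i + 2%:R * sh (sh P) i + sh (sh (sh P)) i.
have hG : forall g, Ev a k.+4 g W = Ev a k.+1 g P + 2%:R *: Ev a k.+1 (fun i => g i.+1) P
     + 2%:R *: Ev a k.+1 (fun i => g i.+2) P + Ev a k.+1 (fun i => g i.+3) P.
  move=> g; rewrite /W Ev_W !Ev_shift.
  have l2 : (k.+1 <= k.+2)%N by lia. have l3 : (k.+1 <= k.+3)%N by lia.
  have l4 : (k.+1 <= k.+4)%N by lia.
  rewrite (@Ev_widen _ _ a k.+1 k.+4 _ _ P0 l4) (@Ev_widen _ _ a k.+1 k.+3 _ _ P0 l3).
  by rewrite (@Ev_widen _ _ a k.+1 k.+2 _ _ P0 l2).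
have -> : S 0 + 2%:R *: S 1 + 2%:R *: S 2 + S 3 =
   Ev a k.+4 (fun i => i%:Z + 1) W - Ev a k.+4 (fun i => 3 - i%:Z) W.
  rewrite !hG /= !hS -rearr.
  have e : forall g g' n, (forall i, g i = g' i) -> Ev a n g P = Ev a n g' P.
    by move=> g g' n h; apply: Ev_ext.
  congr (_ + _ + _ + _ - (_ + _ + _ + _)); try congr (_ *: _); apply: e => i; lia.
rewrite Ev_subn big_add1 /= [in LHS]big_nat_recl // [in RHS]big_nat_recl //.
rewrite [in RHS]big_nat_recl // [in RHS]big_nat_recr // [in RHS]big_nat_recl //=.
set sL := \sum_(0 <= i < k) _.
set sR := \sum_(0 <= i < k) _.
have -> : sL = sR.
  apply: eq_bigr => i _; congr (_ *: (a _ - a _)); try lia.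
  rewrite /W /sh /P !addn1 !subn1 /=.
  have -> : (i.+2 - 2 = i)%N by lia.
  by [].
have -> : a (1%:Z + 2) - a (2 - 1%:Z) = a 3 - a 1 by congr (a _ - a _); lia.
have -> : a (0%:Z + 1) - a (3 - 0%:Z) = - (a 3 - a 1) by rewrite opprB; congr (a _ - a _); lia.
have -> : a (1%:Z + 1) - a (3 - 1%:Z) = 0 by apply/eqP; rewrite subr_eq0; apply/eqP; congr (a _); lia.
have -> : a ((k.+3)%:Z + 1) - a (3 - (k.+3)%:Z) = a (k%:Z + 4) - a (- k%:Z) by congr (a _ - a _); lia.
have -> : W k.+3 = alpha k.
  rewrite /W /sh /P.
  have -> : (k.+3 <= k)%N = false by lia.
  have -> : (k.+2 <= k)%N = false by lia.
  have -> : (k.+1 <= k)%N = false by lia.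
  by rewrite leqnn !mulr0 !add0r.
have -> : W 0%N = alpha 0%N by rewrite /W /sh /P leq0n !mulr0 !addr0.
rewrite scaler0 scalerN scalerBl fin_arr.
congr (_ + (_ + (_ *: _ + _ + _))).
by rewrite /W /sh /P /= addr0.
Qed.

Lemma odd_from_rel (F : fieldType) (M : lmodType F) (a : int -> M) (K : nat)
  (b : F) (g : nat -> F) : (0 < K)%N -> b != 0 ->
  b *: (a K%:Z - a (- K%:Z)) + \sum_(1 <= i < K) g i *: (a i%:Z - a (- i%:Z)) = 0 ->
  has_adim a (2 * K) -> odd_relation a.
Proof.
move=> hK hb H hadim; exists K; left; split => //; split => //.
exists (fun i => if i == K then b else g i); split; first by rewrite eqxx.
rewrite big_nat_recr //= eqxx addrC -[RHS]H; congr (_ + _).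
by apply: eq_big_nat => i /andP [_ hi]; rewrite ltn_eqF.
Qed.

Lemma sw (V : zmodType) (u v x w : V) : (u - v) + (x - w) = (u - w) + (x - v).
Proof. by rewrite addrACA [RHS]addrACA [- w + _]addrC. Qed.

Lemma ident2 (F : fieldType) (M : lmodType F) (a : int -> M) (k : nat) (alpha : nat -> F) :
  \sum_(0 <= i < k.+1) alpha i *: (a (i%:Z + 1) - a (- i%:Z))
  - \sum_(0 <= i < k.+1) alpha i *: (a (- i%:Z - 1) - a i%:Z)
  = alpha k *: (a (k%:Z + 1) - a (- k%:Z - 1))
    + \sum_(1 <= i < k.+1) (alpha i + alpha i.-1) *: (a i%:Z - a (- i%:Z)).
Proof.
rewrite -sumrB.
rewrite (eq_bigr (fun i => alpha i *: (a (i%:Z + 1) - a (- (i%:Z + 1))) + alpha i *: (a i%:Z - a (- i%:Z)))); last first.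
  move=> i _; rewrite -scalerBr -scalerDr; congr (_ *: _).
  by rewrite opprB opprD sw.
rewrite big_split /= big_nat_recr // big_nat_recl //= subrr scaler0 add0r.
rewrite big_add1 /=.
under [in RHS]eq_bigr => i _ do rewrite scalerDl.
rewrite [in RHS]big_split /=.
have e : forall i : nat, i%:Z + 1 = i.+1%:Z by move=> i; lia.
have -> : \sum_(0 <= i < k) alpha i *: (a (i%:Z + 1) - a (- (i%:Z + 1))) =
   \sum_(0 <= i < k) alpha i *: (a i.+1%:Z - a (- i.+1%:Z)).
  by apply: eq_bigr => i _; rewrite e.
rewrite e -opprD e addrAC [RHS]addrC; congr (_ + _).
by rewrite addrC.
Qed.

Lemma lin_props (F : fieldType) (M : lmodType F) (f : M -> M) :
  (forall (c : F) x y, f (c *: x + y) = c *: f x + f y) ->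
  [/\ f 0 = 0, forall u v, f (u + v) = f u + f v,
      forall (c : F) u, f (c *: u) = c *: f u & forall u, f (- u) = - f u].
Proof.
move=> hl.
have f0 : f 0 = 0.
  have h := hl 1 0 0; rewrite !scale1r addr0 in h; apply: (@addrI _ (f 0)); by rewrite addr0 -h.
have fD u v : f (u + v) = f u + f v by have := hl 1 u v; rewrite !scale1r.
have fZ c u : f (c *: u) = c *: f u by rewrite -[_ *: u]addr0 hl f0 addr0.
split => // u; by rewrite -scaleN1r fZ scaleN1r.
Qed.

Lemma f_sum_pair (F : fieldType) (M : lmodType F) (f : M -> M) (a : int -> M) :
  (forall (c : F) x y, f (c *: x + y) = c *: f x + f y) ->
  (forall i, f (a i) = a (i + 1)) ->
  forall m n (c : nat -> F) (u v : nat -> int),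
  f (\sum_(m <= i < n) c i *: (a (u i) - a (v i))) =
  \sum_(m <= i < n) c i *: (a (u i + 1) - a (v i + 1)).
Proof.
move=> hl hfa m n c u v; have [f0 fD fZ fN] := lin_props hl.
rewrite (big_morph f fD f0); apply: eq_bigr => i _.
by rewrite fZ fD fN !hfa.
Qed.

Lemma zsolve (V : zmodType) (x y z : V) : x + y + z = 0 -> y = - x - z.
Proof. by move=> h; apply/eqP; rewrite -opprD -addr_eq0 addrCA addrA h. Qed.

Lemma shift_all (F : fieldType) (M : lmodType F) (f g : M -> M) (E : int -> M) :
  f 0 = 0 -> g 0 = 0 -> E 0 = 0 ->
  (forall m, f (E m) = E (m + 1)) -> (forall m, g (E m) = E (m - 1)) ->
  forall m, E m = 0.
Proof.
move=> f0 g0 E0 hf hg; case=> n.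
  elim: n => [|n IH] //; have -> : Posz n.+1 = Posz n + 1 by lia.
  by rewrite -hf IH.
elim: n => [|n IH].
  have -> : Negz 0 = 0 - 1 by lia.
  by rewrite -hg E0.
have -> : Negz n.+1 = Negz n - 1 by lia.
by rewrite -hg IH.
Qed.

Lemma h_sum_pair (F : fieldType) (M : lmodType F) (f : M -> M) (a : int -> M) (d : int) :
  (forall (c : F) x y, f (c *: x + y) = c *: f x + f y) ->
  (forall i, f (a i) = a (i + d)) ->
  forall m n (c : nat -> F) (u v : nat -> int),
  f (\sum_(m <= i < n) c i *: (a (u i) - a (v i))) =
  \sum_(m <= i < n) c i *: (a (u i + d) - a (v i + d)).
Proof.
move=> hl hfa m n c u v; have [f0 fD fZ fN] := lin_props hl.
rewrite (big_morph f fD f0); apply: eq_bigr => i _.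
by rewrite fZ fD fN !hfa.
Qed.

Lemma rel_all (F : fieldType) (M : lmodType F) (a : int -> M) (f : M -> M)
  (hl : forall (c : F) x y, f (c *: x + y) = c *: f x + f y)
  (hb : bijective f) (hfa : forall i, f (a i) = a (i + 1))
  (K : nat) (b : F) (g : nat -> F) :
  b *: (a K%:Z - a (- K%:Z)) + \sum_(1 <= i < K) g i *: (a i%:Z - a (- i%:Z)) = 0 ->
  forall m : int, b *: (a (K%:Z + m) - a (m - K%:Z))
     + \sum_(1 <= i < K) g i *: (a (i%:Z + m) - a (m - i%:Z)) = 0.
Proof.
move=> H.
have [f0 fD fZ fN] := lin_props hl.
case: hb => h hfh hhf.
have hinj : injective f by apply: (can_inj hfh).
have hl' : forall (c : F) x y, h (c *: x + y) = c *: h x + h y.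
  by move=> c x y; apply: hinj; rewrite hhf hl !hhf.
have [h0 hD hZ hN] := lin_props hl'.
have hha : forall i, h (a i) = a (i + (-1)).
  by move=> i; apply: hinj; rewrite hhf hfa; congr a; lia.
have sh : forall (p : M -> M) (d : int), (forall (c : F) x y, p (c *: x + y) = c *: p x + p y) ->
    (forall i, p (a i) = a (i + d)) -> forall m,
    p (b *: (a (K%:Z + m) - a (m - K%:Z))
     + \sum_(1 <= i < K) g i *: (a (i%:Z + m) - a (m - i%:Z))) =
    b *: (a (K%:Z + (m + d)) - a ((m + d) - K%:Z))
     + \sum_(1 <= i < K) g i *: (a (i%:Z + (m + d)) - a ((m + d) - i%:Z)).
  move=> p d hp hpa m; have [p0 pD pZ pN] := lin_props hp.
  rewrite pD pZ pD pN !hpa (h_sum_pair hp hpa); congr (_ *: (a _ - a _) + _); try lia.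
  by apply: eq_bigr => i _; congr (_ *: (a _ - a _)); lia.
apply: (shift_all f0 h0) => [|m|m]; first last.
- exact: sh.
- exact: sh.
rewrite -[RHS]H; congr (_ *: (a _ - a _) + _); try lia.
by apply: eq_bigr => i _; congr (_ *: (a _ - a _)); lia.
Qed.

Lemma adim_odd (F : fieldType) (M : lmodType F) (a : int -> M) (f : M -> M)
  (hl : forall (c : F) x y, f (c *: x + y) = c *: f x + f y)
  (hb : bijective f) (hfa : forall i, f (a i) = a (i + 1))
  (K : nat) (b : F) (g : nat -> F) : (0 < K)%N -> b != 0 ->
  b *: (a K%:Z - a (- K%:Z)) + \sum_(1 <= i < K) g i *: (a i%:Z - a (- i%:Z)) = 0 ->
  adim_le a (2 * K) /\ (has_adim a (2 * K) -> odd_relation a).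
Proof.
move=> hK hb0 H; split; last exact: odd_from_rel H.
exact: (adim_from_rel hK hb0 (rel_all hl hb hfa H)).
Qed.

Unset Implicit Arguments.

Lemma fin_Z (F : fieldType) (M : lmodType F) (s0 s1 s2 s3 : M) :
  s1 + s2 + (s2 + s3) + s1 = - s0 -> s0 + 2%:R *: s1 + 2%:R *: s2 + s3 = 0.
Proof.
move=> h; rewrite !scaler_nat !mulr2n.
have e : s0 + (s1 + s1) + (s2 + s2) + s3 = s0 + (s1 + s2 + (s2 + s3) + s1).
  rewrite -!addrA; congr (_ + _).
  by rewrite (addrC s3 s1) (addrCA s2 s1 s3) (addrCA s2 s1 (s2 + s3)).
by rewrite e h subrr.
Qed.

Lemma zsolve3 (V : zmodType) (x y z : V) : x + y + z = 0 -> z = - x - y.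
Proof. by move=> h; apply: zsolve; rewrite addrAC. Qed.
Arguments zsolve3 {V x y z}.
Arguments fin_Z {F M s0 s1 s2 s3}.

Theorem lemma1 (F : fieldType) (eta : F)
    (hchar : (2%:R : F) != 0)
    (heta0 : eta != 0) (heta1 : eta != 1) (heta2 : eta != (2%:R)^-1)
    (M : lmodType F) (mul : M -> M -> M) (hM : comm_algebra mul)
    (a : int -> M) (V : int -> nat -> M -> Prop) (hdih : dihedral mul eta a V)
    (f : M -> M) (hf : automorphism mul f) (hfa : forall i, f (a i) = a (i + 1))
    (x y : M)
    (hx1 : miyamoto (V 0) x (- f (f x)))      (* f_2(x) = - tau_0(x) *)
    (hx2 : f (f (f x)) = x)                    (* f_3(x) = x *)
    (hx3 : x + f x + f (f x) = 0)
    (hy1 : f y = - y)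
    (hy2 : miyamoto (V 0) y y)                 (* tau_0(y) = y *)
    (k : nat) (alpha : nat -> F)
    (hrel : x + y + \sum_(0 <= i < k.+1) alpha i *: (a (i%:Z + 1) - a (- i%:Z)) = 0) :
  (* (1) *)
  (alpha k *: (a (k%:Z + 2) - a (- k%:Z - 2))
     + \sum_(1 <= i < k.+2)
         (alpha_ext k alpha (i%:Z + 1) + 2%:R * alpha_ext k alpha i%:Z
          + 2%:R * alpha_ext k alpha (i%:Z - 1) + alpha_ext k alpha (i%:Z - 2))
         *: (a i%:Z - a (- i%:Z)) = 0
   /\ (alpha k != 0 ->
        adim_le a (2 * k + 4) /\ (has_adim a (2 * k + 4) -> odd_relation a)))
  /\
  (* (2) *)
  (x = 0 ->
     (alpha k *: (a (k%:Z + 1) - a (- k%:Z - 1))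
        + \sum_(1 <= i < k.+1) (alpha i + alpha i.-1) *: (a i%:Z - a (- i%:Z)) = 0)
     /\ (alpha k != 0 ->
          adim_le a (2 * k + 2) /\ (has_adim a (2 * k + 2) -> odd_relation a))).
Proof.
case: hdih => hax _ _ hmiy.
have hax0 := hax 0.
case: hf => hlin hbij _.
have [f0 fD fZ fN] := lin_props hlin.
have finj : injective f := bij_inj hbij.
have fB u v : f (u - v) = f u - f v by rewrite fD fN.
have hTa : forall i, miyamoto (V 0) (a i) (a (- i)).
  by move=> i; have := hmiy i 0; rewrite mulr0 sub0r.
set S := \sum_(0 <= i < k.+1) alpha i *: (a (i%:Z + 1) - a (- i%:Z)) in hrel *.
set TS := \sum_(0 <= i < k.+1) alpha i *: (a (- i%:Z - 1) - a i%:Z).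
have miy_diff : forall c x1 x2 y1 y2, miyamoto (V 0) x1 y1 -> miyamoto (V 0) x2 y2 ->
    miyamoto (V 0) (c *: (x1 - x2)) (c *: (y1 - y2)).
  move=> c x1 x2 y1 y2 h1 h2; have h := miy_lin hax0 (-1) h2 h1.
  have h' := miy_lin hax0 c h (miy0 hax0).
  by rewrite !addr0 !scaleN1r ![- _ + _]addrC in h'.
have hTS : miyamoto (V 0) S TS.
  rewrite /S /TS !big_mkord.
  apply: (miy_sum hax0 (G := fun i => alpha i *: (a (i%:Z+1) - a (- i%:Z)))
     (H := fun i => alpha i *: (a (- i%:Z - 1) - a i%:Z))) => i _.
  apply: miy_diff; first by have := hTa (i%:Z + 1); rewrite opprD.
  by have := hTa (- i%:Z); rewrite opprK.
have hfTS : f TS = - S.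
  rewrite /TS (h_sum_pair hlin hfa) /S -sumrN; apply: eq_bigr => i _.
  by rewrite -scalerN opprB; congr (_ *: (a _ - a _)); lia.
have E2 : f x - y + f S = 0.
  by have := congr1 f hrel; rewrite f0 !fD hy1.
have hX2 : f (f x) = S + f S.
  have h3 : x + f x = - f (f x) by apply/eqP; rewrite -addr_eq0 hx3.
  have := congr2 (fun u v => u + v) hrel E2; rewrite /= addr0.
  rewrite addrACA [X in X + _]addrACA subrr addr0 h3 addrC => /eqP.
  by rewrite subr_eq0 => /eqP ->.
have hxS : x = f S + f (f S) by rewrite -{1}hx2 hX2 fD.
have hy : y = - x - S := zsolve hrel.
have E4 : - f (f x) + y + TS = 0.
  have h1 := miy_lin hax0 1 hx1 hy2; have h2 := miy_lin hax0 1 h1 hTS.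
  rewrite !scale1r hrel in h2; exact: esym (miy_uniq hax0 (miy0 hax0) h2).
have hTS' : TS = f (f x) + (x + S).
  by rewrite (zsolve3 E4) hy !opprD !opprK.
have Z : S + 2%:R *: f S + 2%:R *: f (f S) + f (f (f S)) = 0.
  apply: fin_Z; rewrite -hfTS hTS' !fD hx2 {1}hxS.
  by rewrite hxS fD [RHS]addrA.
pose Sf := fun m : int => \sum_(0 <= i < k.+1) alpha i *: (a (i%:Z + 1 + m) - a (- i%:Z + m)).
have hSf : forall j : nat, iter j f S = Sf j%:Z.
  elim=> [|j IH] /=.
    by rewrite /Sf /S; apply: eq_bigr => i _; rewrite !addr0.
  rewrite IH /Sf (h_sum_pair hlin hfa); apply: eq_bigr => i _.
  by congr (_ *: (a _ - a _)); lia.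
have hR : alpha k *: (a (k%:Z + 2) - a (- k%:Z - 2))
     + \sum_(1 <= i < k.+2)
         (alpha_ext k alpha (i%:Z + 1) + 2%:R * alpha_ext k alpha i%:Z
          + 2%:R * alpha_ext k alpha (i%:Z - 1) + alpha_ext k alpha (i%:Z - 2))
         *: (a i%:Z - a (- i%:Z)) = 0.
  apply: (finj); rewrite f0; apply: (finj); rewrite f0; apply: (etrans _ Z).
  have -> : S + 2%:R *: f S + 2%:R *: f (f S) + f (f (f S)) =
     Sf 0 + 2%:R *: Sf 1 + 2%:R *: Sf 2 + Sf 3.
    by congr (_ + _ *: _ + _ *: _ + _); [exact: (hSf 0%N) | exact: (hSf 1%N) | exact: (hSf 2%N) | exact: (hSf 3%N)].
  rewrite -(big_identity a k alpha) !fD !fZ !fB !hfa !(h_sum_pair hlin hfa).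
  congr (_ *: (a _ - a _) + _); try lia.
  by apply: eq_bigr => i _; congr (_ *: (a _ - a _)); lia.
split.
  split => // hk.
  have -> : (2 * k + 4 = 2 * k.+2)%N by lia.
  apply: (adim_odd hlin hbij hfa _ hk) => //.
  rewrite -[RHS]hR; congr (_ *: (a _ - a _) + _); lia.
move=> hx0.
have hrel2 : y + S = 0 by rewrite -hrel hx0 add0r.
have hTSS : TS = S.
  have h := miy_lin hax0 1 hy2 hTS; rewrite !scale1r hrel2 in h.
  have e := miy_uniq hax0 (miy0 hax0) h.
  have e' : 0 + y + TS = 0 by rewrite add0r -e.
  by rewrite (zsolve3 e') hy hx0 !oppr0 !sub0r opprK.
have hR2 : alpha k *: (a (k%:Z + 1) - a (- k%:Z - 1))
        + \sum_(1 <= i < k.+1) (alpha i + alpha i.-1) *: (a i%:Z - a (- i%:Z)) = 0.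
  by rewrite -ident2 -/S -/TS hTSS subrr.
split => // hk.
have -> : (2 * k + 2 = 2 * k.+1)%N by lia.
apply: (adim_odd hlin hbij hfa _ hk) => //.
rewrite -[RHS]hR2; congr (_ *: (a _ - a _) + _); lia.
Qed.
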